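(* There is a set $E\subset[0,1]$ with $\dim_H(E)=0$ such that for every irrational $x\in[0,1]\setminus E$ the sequence $(g_k(x))_{k\in\mathbb{N}}$ of $\bar O^1$-symbols of $x$ is unbounded.
   Context: Every irrational $x\in(0,1)$ has a unique representation ($\bar O^1$-expansion) $$x=\sum_{k=1}^\infty\frac{(-1)^{k-1}}{g_1(g_1+g_2)\cdots(g_1+g_2+\dots+g_k)},\qquad g_k=g_k(x)\in\mathbb{N}=\{1,2,3,\dots\}.$$ The numbers $g_k(x)$ are called the $\bar O^1$-symbols of $x$. $\dim_H$ denotes Hausdorff dimension. *)

(* Defs.v *)
From Stdlib Require Import Reals QArith.
From Coquelicot Require Import Coquelicot.
Open Scope R_scope.

(* d^s for d >= 0 and s > 0, with 0^s = 0 (Stdlib's Rpower 0 s is 1). *)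
Definition rpow0 (d s : R) : R := if Rle_dec d 0 then 0 else Rpower d s.

Definition delta_cover (delta : R) (E : R -> Prop)
    (U : nat -> R -> Prop) (d : nat -> R) : Prop :=
  (forall x, E x -> exists i, U i x) /\
  (forall i, 0 <= d i <= delta) /\
  (forall i x y, U i x -> U i y -> Rabs (x - y) <= d i).

Definition hausdorff_content (s delta : R) (E : R -> Prop) : Rbar :=
  Rbar_glb (fun v : Rbar => exists (U : nat -> R -> Prop) (d : nat -> R),
     delta_cover delta E U d /\
     v = Lim_seq (fun n => sum_n (fun i => rpow0 (d i) s) n)).

Definition hausdorff_measure (s : R) (E : R -> Prop) : Rbar :=
  Rbar_lub (fun v : Rbar => exists delta, 0 < delta /\ v = hausdorff_content s delta E).

Definition hausdorff_dim (E : R -> Prop) : Rbar :=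
  Rbar_glb (fun t : Rbar => exists s, 0 < s /\ t = Finite s /\
                                      hausdorff_measure s E = Finite 0).

Definition irrational (x : R) : Prop := ~ exists q : Q, x = Q2R q.

(* Symbols are indexed from 0: g 0 = g_1, g 1 = g_2, ...
   partial_g g j = g_1 + ... + g_{j+1}. *)
Definition partial_g (g : nat -> nat) (j : nat) : R :=
  sum_n (fun i => INR (g i)) j.

Fixpoint denom (g : nat -> nat) (k : nat) : R :=
  match k with
  | O => partial_g g 0
  | S k' => denom g k' * partial_g g (S k')
  end.

(* g is an O-bar^1 expansion of x: all g_k in N = {1,2,...} and
   x = sum_{k>=1} (-1)^(k-1) / (g_1 (g_1+g_2) ... (g_1+...+g_k)). *)
Definition O1_expansion (x : R) (g : nat -> nat) : Prop :=
  (forall k, (1 <= g k)%nat) /\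
  is_series (fun k => (-1) ^ k / denom g k) x.

(* Main.v *)
Require Import Defs.
From Stdlib Require Import Reals QArith Lia Lra Factorial IndefiniteDescription Classical_Prop.
From Coquelicot Require Import Coquelicot.
Open Scope R_scope.

Fixpoint sumb (f : nat -> R) (K : nat) : R :=
  match K with O => 0 | S K => sumb f K + f K end.

Lemma sum_n_sumb f N : sum_n f N = sumb f (S N).
Proof.
  induction N; simpl.
  - rewrite sum_O. lra.
  - rewrite sum_Sn, IHN. simpl. unfold plus; simpl. lra.
Qed.

Lemma sumb_ext f g K : (forall k, (k < K)%nat -> f k = g k) -> sumb f K = sumb g K.
Proof. induction K; intros H; simpl; auto. rewrite IHK; [rewrite H|]; auto; intros; apply H; lia. Qed.

Lemma sumb_le f g K : (forall k, (k < K)%nat -> f k <= g k) -> sumb f K <= sumb g K.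
Proof. induction K; intros H; simpl; [lra|]. assert (f K <= g K) by (apply H; lia).
  assert (sumb f K <= sumb g K) by (apply IHK; intros; apply H; lia). lra. Qed.

Lemma sumb_nonneg f K : (forall k, 0 <= f k) -> 0 <= sumb f K.
Proof. intros H; induction K; simpl; [lra|]. specialize (H K); lra. Qed.

Lemma sumb_mono f K K' : (forall k, 0 <= f k) -> (K <= K')%nat -> sumb f K <= sumb f K'.
Proof. intros H Hle; induction Hle; simpl; [lra|]. specialize (H m); lra. Qed.

Lemma sumb_split f n K : sumb f (n + K) = sumb f n + sumb (fun t => f (n + t)%nat) K.
Proof. induction K; simpl. - rewrite Nat.add_0_r; lra. - rewrite Nat.add_succ_r; simpl; rewrite IHK; lra. Qed.

Lemma sumb_abs f K : Rabs (sumb f K) <= sumb (fun k => Rabs (f k)) K.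
Proof. induction K; simpl. - rewrite Rabs_R0; lra. - eapply Rle_trans; [apply Rabs_triang|]. lra. Qed.

Lemma sumb_geom K : sumb (fun t => (/2)^t) K + 2 * (/2)^K = 2.
Proof. induction K; simpl; [lra|]. lra. Qed.

Lemma sumb_scal c f K : sumb (fun t => c * f t) K = c * sumb f K.
Proof. induction K; simpl; [lra|]. rewrite IHK; lra. Qed.

Lemma partial_g_ge g : (forall k, (1 <= g k)%nat) -> forall j, INR (S j) <= partial_g g j.
Proof.
  intros Hg j; induction j; unfold partial_g in *.
  - rewrite sum_O. apply le_INR, Hg.
  - rewrite sum_Sn. change (plus (sum_n (fun i => INR (g i)) j) (INR (g (S j)))) with (sum_n (fun i => INR (g i)) j + INR (g (S j))). pose proof (le_INR _ _ (Hg (S j))). pose proof (S_INR (S j)). change (INR 1) with 1 in H. lra.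
Qed.

Lemma denom_ge g : (forall k, (1 <= g k)%nat) -> forall k, INR (fact (S k)) <= denom g k.
Proof.
  intros Hg k; induction k; simpl denom.
  - pose proof (partial_g_ge g Hg 0). simpl in *. lra.
  - replace (fact (S (S k))) with (S (S k) * fact (S k))%nat by reflexivity.
    rewrite mult_INR. pose proof (partial_g_ge g Hg (S k)).
    assert (0 <= INR (S (S k))) by apply pos_INR.
    assert (0 < INR (fact (S k))) by (apply lt_0_INR, lt_O_fact).
    rewrite Rmult_comm. apply Rmult_le_compat; lra.
Qed.

Lemma fact_ge n t : (fact (S n) * 2 ^ t <= fact (S n + t))%nat.
Proof.
  induction t. - rewrite Nat.add_0_r; simpl; lia.
  - rewrite Nat.add_succ_r. replace (fact (S (S n + t))) with (S (S n + t) * fact (S n + t))%nat by reflexivity.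
    rewrite Nat.pow_succ_r'. nia.
Qed.

Lemma fact_pos n : 0 < INR (fact n).
Proof. apply lt_0_INR, lt_O_fact. Qed.

Definition Sg (g : nat -> nat) (n : nat) : R := sumb (fun k => (-1) ^ k / denom g k) n.

Lemma tail_bound x g n : O1_expansion x g -> Rabs (x - Sg g n) <= 2 / INR (fact (S n)).
Proof.
  intros [Hg Hs].
  set (a := fun k => (-1) ^ k / denom g k).
  assert (Hd : forall k, 0 < denom g k) by (intro k; eapply Rlt_le_trans; [apply fact_pos|apply denom_ge; auto]).
  assert (Hlim : is_lim_seq (fun N => Rabs (sum_n a N - Sg g n)) (Rabs (x - Sg g n))).
  { apply (is_lim_seq_abs _ (Finite (x - Sg g n))). apply is_lim_seq_minus'; [exact Hs|apply is_lim_seq_const]. }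
  assert (HEv : eventually (fun N => Rabs (sum_n a N - Sg g n) <= 2 / INR (fact (S n)))).
  2: { assert (H := is_lim_seq_le_loc _ _ _ _ HEv Hlim (is_lim_seq_const (2 / INR (fact (S n))))).
       simpl in H. exact H. }
  exists n. intros N HN.
  rewrite sum_n_sumb. replace (S N) with (n + (S N - n))%nat by lia.
  rewrite sumb_split. unfold Sg. fold a.
  replace (sumb a n + sumb (fun t => a (n + t)%nat) (S N - n) - sumb a n) with (sumb (fun t => a (n + t)%nat) (S N - n)) by ring.
  eapply Rle_trans; [apply sumb_abs|].
  eapply Rle_trans with (sumb (fun t => / INR (fact (S n)) * (/2)^t) (S N - n)).
  { apply sumb_le. intros k _. unfold a. unfold Rdiv. rewrite Rabs_mult, pow_1_abs, Rmult_1_l.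
    rewrite Rabs_inv, Rabs_pos_eq by (apply Rlt_le, Hd).
    rewrite <- Rinv_pow by lra. rewrite <- Rinv_mult.
    apply Rinv_le_contravar. apply Rmult_lt_0_compat; [apply fact_pos| apply pow_lt; lra].
    eapply Rle_trans; [|apply denom_ge; auto].
    replace (S (n + k)) with (S n + k)%nat by lia.
    eapply Rle_trans; [|apply le_INR, fact_ge]. rewrite mult_INR, pow_INR. replace (INR 2) with 2 by (simpl; ring). lra. }
  rewrite sumb_scal. pose proof (sumb_geom (S N - n)).
  assert (0 < (/2) ^ (S N - n)) by (apply pow_lt; lra).
  pose proof (fact_pos (S n)).
  unfold Rdiv. rewrite (Rmult_comm 2). apply Rmult_le_compat_l. apply Rlt_le, Rinv_0_lt_compat; lra. change (sumb (fun t => (/2)^t) (S N - n) <= 2). lra.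
Qed.

Fixpoint code (b n : nat) (g : nat -> nat) : nat :=
  match n with O => O | S n => (g O - 1) + b * code b n (fun k => g (S k)) end.

Lemma code_lt b n g : (forall k, 1 <= g k <= b)%nat -> (code b n g < b ^ n)%nat.
Proof.
  revert g; induction n; intros g Hg; simpl; [lia|].
  specialize (IHn (fun k => g (S k)) (fun k => Hg (S k))). specialize (Hg O). nia.
Qed.

Lemma code_inj b n g g' : (forall k, 1 <= g k <= b)%nat -> (forall k, 1 <= g' k <= b)%nat ->
  code b n g = code b n g' -> forall k, (k < n)%nat -> g k = g' k.
Proof.
  revert g g'; induction n; intros g g' Hg Hg' Hc k Hk; [lia|]. simpl in Hc.
  pose proof (Hg O) as Hg0; pose proof (Hg' O) as Hg0'.
  set (c := code b n (fun k => g (S k))) in Hc. set (c' := code b n (fun k => g' (S k))) in Hc.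
  assert (c = c' /\ g O = g' O) as [Hcc Hgg].
  { destruct (Nat.lt_trichotomy c c') as [Hl|[He|Hl]]; [nia| |nia]. split; [auto|]. nia. }
  destruct k; auto.
  apply (IHn (fun k => g (S k)) (fun k => g' (S k))); auto; lia.
Qed.

Lemma partial_g_ext g g' j : (forall k, (k <= j)%nat -> g k = g' k) -> partial_g g j = partial_g g' j.
Proof. intros H. unfold partial_g. apply sum_n_ext_loc. intros; rewrite H; auto. Qed.

Lemma denom_ext g g' j : (forall k, (k <= j)%nat -> g k = g' k) -> denom g j = denom g' j.
Proof.
  induction j; intros H; simpl. - apply partial_g_ext; auto.
  - rewrite IHj by (intros; apply H; lia). rewrite (partial_g_ext g g'); auto.
Qed.

Lemma Sg_ext g g' n : (forall k, (k < n)%nat -> g k = g' k) -> Sg g n = Sg g' n.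
Proof. intros H. unfold Sg. apply sumb_ext. intros k Hk. rewrite (denom_ext g g'); auto. intros; apply H; lia. Qed.

Lemma cyl_diam b n x y g g' : (forall k, 1 <= g k <= b)%nat -> (forall k, 1 <= g' k <= b)%nat ->
  O1_expansion x g -> O1_expansion y g' -> code b n g = code b n g' ->
  Rabs (x - y) <= 4 / INR (fact (S n)).
Proof.
  intros Hg Hg' Hx Hy Hc.
  pose proof (tail_bound x g n Hx). pose proof (tail_bound y g' n Hy).
  rewrite (Sg_ext g g' n) in H by (apply code_inj with b; auto).
  replace (x - y) with ((x - Sg g' n) - (y - Sg g' n)) by ring.
  eapply Rle_trans; [apply Rabs_triang|]. rewrite Rabs_Ropp.
  replace (4 / INR (fact (S n))) with (2 / INR (fact (S n)) + 2 / INR (fact (S n))) by (field; apply Rgt_not_eq, fact_pos).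
  lra.
Qed.

Lemma numeric (Mr s delta eta : R) : 1 <= Mr -> 0 < s -> 0 < delta -> 0 < eta ->
  exists n : nat, Mr ^ n * Rpower (4 / INR (fact (S n))) s <= eta /\ 4 / INR (fact (S n)) <= delta.
Proof.
  intros HM Hs Hdl He.
  set (F := fun n => ln (INR (fact (S n)))).
  set (l := fun n => INR n * ln Mr + s * (ln 4 - F n)).
  assert (Hval : forall n, Mr ^ n * Rpower (4 / INR (fact (S n))) s = exp (l n)).
  { intro n. unfold l, F. rewrite exp_plus. rewrite <- (Rpower_pow n Mr) by lra.
    unfold Rpower. rewrite ln_div by (lra || apply fact_pos). reflexivity. }
  assert (HF : forall n, F (S n) = ln (INR (S (S n))) + F n).
  { intro n. unfold F. rewrite <- ln_mult by (apply lt_0_INR; lia || apply lt_O_fact).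
    rewrite <- mult_INR. reflexivity. }
  destruct (INR_archimed 1 (exp ((ln Mr + 1) / s)) ltac:(lra)) as [K HK].
  assert (Hstep : forall t, l (K + t)%nat <= l K - INR t).
  { induction t. - rewrite Nat.add_0_r; simpl; lra.
    - rewrite Nat.add_succ_r. unfold l at 1. rewrite HF. rewrite S_INR.
      fold (l (K + t)%nat) in *.
      assert (ln Mr + 1 <= s * ln (INR (S (S (K + t))))).
      { assert (exp ((ln Mr + 1) / s) <= INR (S (S (K + t)))).
        { rewrite Rmult_1_r in HK. eapply Rle_trans; [apply Rlt_le, HK|]. apply le_INR; lia. }
        apply ln_le in H; [|apply exp_pos]. rewrite ln_exp in H.
        apply Rmult_le_compat_l with (r := s) in H; [|lra].
        replace (s * ((ln Mr + 1) / s)) with (ln Mr + 1) in H by (field; lra). exact H. }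
      unfold l in *. set (L := ln (INR (S (S (K + t))))) in *. rewrite !S_INR. nra. }
  destruct (INR_archimed 1 (Rmax (l K - ln eta) (4 / delta)) ltac:(lra)) as [t Ht].
  rewrite Rmult_1_r in Ht.
  exists (K + t)%nat. split.
  - rewrite Hval. rewrite <- (exp_ln eta) by lra. change (exp (l (K + t)%nat) <= exp (ln eta)).
    assert (l (K + t)%nat <= ln eta).
    { pose proof (Hstep t). pose proof (Rmax_l (l K - ln eta) (4 / delta)). lra. }
    destruct (Rle_lt_or_eq_dec _ _ H) as [Hl|Hq]; [apply Rlt_le, exp_increasing; auto| rewrite Hq; lra].
  - assert (Hf : (S (K + t) <= fact (S (K + t)))%nat).
    { change (fact (S (K + t))) with (S (K + t) * fact (K + t))%nat. pose proof (lt_O_fact (K + t)). nia. }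
    apply le_INR in Hf. assert (INR t <= INR (S (K + t))) by (apply le_INR; lia).
    pose proof (Rmax_r (l K - ln eta) (4 / delta)).
    assert (4 < delta * INR t).
    { assert (Hq : 4 / delta < INR t) by lra. apply (Rmult_lt_compat_l delta) in Hq; auto.
      replace (delta * (4 / delta)) with 4 in Hq by (field; lra). lra. }
    pose proof (fact_pos (S (K + t))).
    apply (Rmult_le_reg_r (INR (fact (S (K + t))))); auto. unfold Rdiv. rewrite Rmult_assoc, Rinv_l by lra. nra.
Qed.

Lemma choice_fun {A B : Type} (P : A -> B -> Prop) : (forall a, exists b, P a b) -> exists f : A -> B, forall a, P a (f a).
Proof. intros H. exists (fun a => proj1_sig (constructive_indefinite_description _ (H a))).
  intro a. exact (proj2_sig (constructive_indefinite_description _ (H a))). Qed.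

Fixpoint Bs (L : nat -> nat) (m : nat) : nat := match m with O => O | S m => (Bs L m + L m)%nat end.

Lemma Bs_ge L m : (forall k, 1 <= L k)%nat -> (m <= Bs L m)%nat.
Proof. intros H; induction m; simpl; [lia|]. specialize (H m); lia. Qed.

Lemma Bs_mono L m m' : (m < m')%nat -> (Bs L (S m) <= Bs L m')%nat.
Proof. intros H; induction H; [lia|]. change (Bs L (S m0)) with (Bs L m0 + L m0)%nat. lia. Qed.

Lemma Bs_uniq L m j m' j' : (j < L m)%nat -> (j' < L m')%nat -> (Bs L m + j = Bs L m' + j')%nat -> m = m' /\ j = j'.
Proof.
  intros H1 H2 He. destruct (Nat.lt_trichotomy m m') as [Hl|[Hq|Hl]].
  - pose proof (Bs_mono L _ _ Hl). simpl in H. lia.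
  - subst; lia.
  - pose proof (Bs_mono L _ _ Hl). simpl in H. lia.
Qed.

Lemma Bs_dec L : (forall k, 1 <= L k)%nat -> forall i, exists p : nat * nat, i = (Bs L (fst p) + snd p)%nat /\ (snd p < L (fst p))%nat.
Proof.
  intros HL i; induction i.
  - exists (O, O). simpl. specialize (HL O). lia.
  - destruct IHi as [[m j] [Hi Hj]]; simpl in *.
    destruct (Nat.lt_ge_cases (S j) (L m)).
    + exists (m, S j); simpl; lia.
    + exists (S m, O); simpl. specialize (HL (S m)). lia.
Qed.

Lemma sumb_const c K : sumb (fun _ => c) K = INR K * c.
Proof. induction K; simpl sumb. - simpl; ring. - rewrite IHK, S_INR; ring. Qed.

Lemma rpow0_nonneg d s : 0 <= rpow0 d s.
Proof. unfold rpow0. destruct (Rle_dec d 0); [lra|]. unfold Rpower. apply Rlt_le, exp_pos. Qed.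

Definition Eset (x : R) : Prop :=
  (0 <= x <= 1) /\ exists (M : nat) (g : nat -> nat), O1_expansion x g /\ forall k, (g k <= M)%nat.

Lemma cover_small s delta eps : 0 < s -> 0 < delta -> 0 < eps ->
  exists (U : nat -> R -> Prop) (d : nat -> R), delta_cover delta Eset U d /\
    Rbar_le (Lim_seq (fun n => sum_n (fun i => rpow0 (d i) s) n)) eps.
Proof.
  intros Hs Hd He.
  assert (Hn : forall m : nat, exists n : nat, INR (S m) ^ n * Rpower (4 / INR (fact (S n))) s <= eps / 2 ^ (S m)
      /\ 4 / INR (fact (S n)) <= delta).
  { intro m. apply numeric; auto. apply (le_INR 1); lia. apply Rdiv_lt_0_compat; auto. apply pow_lt; lra. }
  destruct (choice_fun _ Hn) as [nf Hnf].
  set (L := fun m => (S m ^ nf m)%nat).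
  assert (HL : forall m, (1 <= L m)%nat).
  { intro m. unfold L. pose proof (Nat.pow_le_mono_l 1 (S m) (nf m) ltac:(lia)). rewrite Nat.pow_1_l in H. lia. }
  destruct (choice_fun _ (Bs_dec L HL)) as [dec Hdec].
  assert (Hdecu : forall m j, (j < L m)%nat -> dec (Bs L m + j)%nat = (m, j)).
  { intros m j Hj. destruct (Hdec (Bs L m + j)%nat) as [H1 H2].
    destruct (dec (Bs L m + j)%nat) as [m' j']. simpl in H1, H2.
    destruct (Bs_uniq L _ _ _ _ H2 Hj (eq_sym H1)) as [-> ->]. reflexivity. }
  set (dd := fun m => 4 / INR (fact (S (nf m)))).
  assert (Hdd : forall m, 0 < dd m) by (intro m; apply Rdiv_lt_0_compat; [lra|apply fact_pos]).
  exists (fun i x => Eset x /\ exists g, O1_expansion x g /\ (forall k, g k <= S (fst (dec i)))%nat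
           /\ code (S (fst (dec i))) (nf (fst (dec i))) g = snd (dec i)).
  exists (fun i => dd (fst (dec i))).
  split; [split; [|split]|].
  - intros x Hx. pose proof Hx as [_ [M [g [Hg HM]]]].
    set (j := code (S M) (nf M) g).
    assert (Hj : (j < L M)%nat).
    { apply code_lt. intro k. destruct Hg as [Hg1 _]. specialize (Hg1 k); specialize (HM k); lia. }
    exists (Bs L M + j)%nat. rewrite Hdecu by auto. simpl. split; auto.
    exists g. split; [exact Hg|]. split; [|reflexivity]. intro k; specialize (HM k); lia.
  - intro i. split; [apply Rlt_le, Hdd|]. apply Hnf.
  - intros i x y [_ [g [Hg [Hgb Hgc]]]] [_ [g' [Hg' [Hgb' Hgc']]]].
    apply (cyl_diam (S (fst (dec i))) _ x y g g'); auto.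
    + intro k. destruct Hg as [H1 _]. specialize (H1 k); specialize (Hgb k); lia.
    + intro k. destruct Hg' as [H1 _]. specialize (H1 k); specialize (Hgb' k); lia.
    + congruence.
  - set (r := fun m => Rpower (dd m) s).
    assert (Hf : forall i, rpow0 (dd (fst (dec i))) s = r (fst (dec i))).
    { intro i. unfold rpow0, r. destruct (Rle_dec _ 0) as [Hc|]; auto. pose proof (Hdd (fst (dec i))). lra. }
    assert (Hblock : forall M, sumb (fun i => rpow0 (dd (fst (dec i))) s) (Bs L M) = sumb (fun m => INR (L m) * r m) M).
    { induction M; simpl; auto. rewrite sumb_split, IHM. f_equal.
      rewrite <- sumb_const. apply sumb_ext. intros k Hk. rewrite Hf, Hdecu by auto. reflexivity. }
    assert (Hbnd : forall M, sumb (fun m => INR (L m) * r m) M <= eps).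
    { intro M. eapply Rle_trans with (sumb (fun m => eps / 2 * (/2) ^ m) M).
      - apply sumb_le. intros m _. unfold L, r, dd. rewrite pow_INR.
        replace (eps / 2 * (/ 2) ^ m) with (eps / 2 ^ S m).
        + apply Hnf.
        + simpl. rewrite <- Rinv_pow by lra. field. apply pow_nonzero; lra.
      - rewrite sumb_scal. pose proof (sumb_geom M). assert (0 < (/2)^M) by (apply pow_lt; lra).
        change (sumb (fun t => (/2)^t) M) with (sumb (pow (/2)) M) in H. nra. }
    assert (Hle := Lim_seq_le_loc (fun n => sum_n (fun i => rpow0 (dd (fst (dec i))) s) n) (fun _ => eps)).
    rewrite Lim_seq_const in Hle. apply Hle.
    exists O. intros N _. rewrite sum_n_sumb.
    eapply Rle_trans; [apply sumb_mono with (K' := Bs L (S N))|].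
    + intro k; apply rpow0_nonneg.
    + apply Bs_ge; auto.
    + rewrite Hblock. apply Hbnd.
Qed.

Lemma content_zero s delta : 0 < s -> 0 < delta -> hausdorff_content s delta Eset = Finite 0.
Proof.
  intros Hs Hd. unfold hausdorff_content. apply Rbar_is_glb_unique. split.
  - intros v [U [d [_ ->]]].
    assert (Hle := Lim_seq_le_loc (fun _ => 0) (fun n => sum_n (fun i => rpow0 (d i) s) n)).
    rewrite Lim_seq_const in Hle. apply Hle. exists O. intros N _.
    rewrite sum_n_sumb. apply sumb_nonneg. intro; apply rpow0_nonneg.
  - intros b Hb. destruct b as [r| |]; simpl; auto.
    + destruct (Rle_dec r 0) as [|Hr]; auto. exfalso. apply Rnot_le_lt in Hr.
      destruct (cover_small s delta (r/2) Hs Hd ltac:(lra)) as [U [d [Hc Hl]]].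
      assert (H := Hb _ (ex_intro _ U (ex_intro _ d (conj Hc eq_refl)))).
      pose proof (Rbar_le_trans _ _ _ H Hl). simpl in H0. lra.
    + destruct (cover_small s delta 1 Hs Hd ltac:(lra)) as [U [d [Hc Hl]]].
      assert (H := Hb _ (ex_intro _ U (ex_intro _ d (conj Hc eq_refl)))).
      pose proof (Rbar_le_trans _ _ _ H Hl). simpl in H0. exact H0.
Qed.

Lemma measure_zero s : 0 < s -> hausdorff_measure s Eset = Finite 0.
Proof.
  intros Hs. unfold hausdorff_measure. apply Rbar_is_lub_unique. split.
  - intros v [delta [Hd ->]]. rewrite content_zero; simpl; auto; lra.
  - intros b Hb. apply Hb. exists 1. split; [lra|]. rewrite content_zero; auto; lra.
Qed.

Lemma dim_zero : hausdorff_dim Eset = Finite 0.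
Proof.
  unfold hausdorff_dim. apply Rbar_is_glb_unique. split.
  - intros t [s [Hs [-> _]]]. simpl; lra.
  - intros b Hb. destruct b as [r| |]; simpl; auto.
    + destruct (Rle_dec r 0) as [|Hr]; auto. exfalso. apply Rnot_le_lt in Hr.
      assert (Hr2 : 0 < r/2) by lra.
      assert (H := Hb (Finite (r/2)) (ex_intro _ (r/2) (conj Hr2 (conj eq_refl (measure_zero (r/2) Hr2))))).
      simpl in H. lra.
    + assert (H1 : 0 < 1) by lra. exact (Hb (Finite 1) (ex_intro _ 1 (conj H1 (conj eq_refl (measure_zero 1 H1))))).
Qed.

Theorem corollary2 :
  exists E : R -> Prop,
    (forall x, E x -> 0 <= x <= 1) /\
    hausdorff_dim E = Finite 0 /\
    forall x : R, 0 <= x <= 1 -> irrational x -> ~ E x ->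
      forall g : nat -> nat, O1_expansion x g ->
        forall M : nat, exists k : nat, (M < g k)%nat.
Proof.
  exists Eset. split; [intros x [H _]; exact H|]. split; [exact dim_zero|].
  intros x Hx _ HE g Hg M. apply Classical_Prop.NNPP. intro Hno.
  apply HE. split; auto. exists M, g. split; auto. intro k.
  destruct (Nat.le_gt_cases (g k) M); auto. exfalso; apply Hno; exists k; auto.
Qed.
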